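(* Fix $n\ge 1$, $\theta\in(1/2,7/8]$, an integer $k\ge 1$, an interval $[\underline h,\bar h]\subset(0,1)$, $h_1\in[0,1]$ and $\alpha\in[0,1]$. Fix any realization of the couplings $(J_X)_{X\subset\{1,\dots,n\}}$ (with $J_X\ge 0$) and of the integer vector $\boldsymbol\tau=(\tau_1,\dots,\tau_n)$. Assume that for every $h_0\in[\underline h,\bar h]$ the Gibbs measure $\langle\cdot\rangle_{h_0,h_1,\alpha}$ satisfies $\langle\sigma_i\sigma_j\rangle_{h_0,h_1,\alpha}-\langle\sigma_i\rangle_{h_0,h_1,\alpha}\langle\sigma_j\rangle_{h_0,h_1,\alpha}\ge 0$ for all $i,j\in\{1,\dots,n\}$. Then $$\int_{\underline h}^{\bar h}dh_0\,\big\langle\big(Q_k-\langle Q_k\rangle_{h_0,h_1,\alpha}\big)^2\big\rangle_{h_0,h_1,\alpha}\le\frac{2k}{n}.$$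
   Context: Spins $\boldsymbol\sigma=(\sigma_1,\dots,\sigma_n)\in\{-1,1\}^n$; for $X\subset\{1,\dots,n\}$ write $\sigma_X=\prod_{i\in X}\sigma_i$. The couplings $J_X\ge 0$ are indexed by all subsets $X\subset\{1,\dots,n\}$; $\tau_i$ are nonnegative integers (in the random model they are i.i.d. Poisson with mean $\alpha n^{\theta-1}$, independent of the couplings). The Hamiltonian is $\mathcal H(\boldsymbol\sigma)=-\sum_{X\subset\{1,\dots,n\}}J_X\sigma_X-h_0\sum_{i=1}^n\sigma_i-h_1\sum_{i=1}^n\tau_i\sigma_i$, with partition function $\mathcal Z=\sum_{\boldsymbol\sigma}e^{-\mathcal H(\boldsymbol\sigma)}$ and Gibbs expectation $\langle f\rangle_{h_0,h_1,\alpha}=\mathcal Z^{-1}\sum_{\boldsymbol\sigma}f(\boldsymbol\sigma)e^{-\mathcal H(\boldsymbol\sigma)}$. For functions of $k$ replicas $\boldsymbol\sigma^{(1)},\dots,\boldsymbol\sigma^{(k)}$, $\langle\cdot\rangle$ denotes expectation under the $k$-fold product of the Gibbs measure (independent replicas). The overlap is $Q_k=\frac1n\sum_{i=1}^n\sigma_i^{(1)}\cdots\sigma_i^{(k)}$. *)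

(* Defs.v *)
From HB Require Import structures.
From mathcomp Require Import all_boot all_order all_algebra.
From mathcomp Require Import all_classical all_reals all_analysis.
Set Implicit Arguments. Unset Strict Implicit. Unset Printing Implicit Defensive.
Import Order.TTheory GRing.Theory Num.Theory.
Local Open Scope ring_scope.

Section Defs.
Variables (R : realType) (n : nat).

Definition config := {ffun 'I_n -> bool}.
Definition spin (b : bool) : R := if b then 1 else -1.

Definition sigmaX (X : {set 'I_n}) (s : config) : R := \prod_(i in X) spin (s i).

Definition hamiltonian (J : {set 'I_n} -> R) (tau : 'I_n -> nat) (h0 h1 : R)
  (s : config) : R :=
  - (\sum_(X : {set 'I_n}) J X * sigmaX X s)
  - h0 * (\sum_(i < n) spin (s i))
  - h1 * (\sum_(i < n) (tau i)%:R * spin (s i)).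

Definition boltz J tau h0 h1 (s : config) : R := expR (- hamiltonian J tau h0 h1 s).

Definition partition J tau h0 h1 : R := \sum_(s : config) boltz J tau h0 h1 s.

Definition gibbs J tau h0 h1 (f : config -> R) : R :=
  (\sum_(s : config) f s * boltz J tau h0 h1 s) / partition J tau h0 h1.

Definition gibbsk (k : nat) J tau h0 h1 (f : {ffun 'I_k -> config} -> R) : R :=
  (\sum_(S : {ffun 'I_k -> config})
      f S * \prod_(a < k) boltz J tau h0 h1 (S a))
  / (partition J tau h0 h1) ^+ k.

Definition overlap (k : nat) (S : {ffun 'I_k -> config}) : R :=
  n%:R^-1 * \sum_(i < n) \prod_(a < k) spin (S a i).

End Defs.

(* Main.v *)
Require Import Defs.
From HB Require Import structures.
From mathcomp Require Import all_boot all_order all_algebra.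
From mathcomp Require Import all_classical all_reals all_analysis.
From mathcomp Require Import ring lra.
Import Order.TTheory GRing.Theory Num.Theory.
Local Open Scope ring_scope.


Section Alg.
Variables (R : realType) (n k : nat) (w : config n -> R).
Hypothesis wpos : forall s, 0 < w s.

Definition Ew (f : config n -> R) := (\sum_s f s * w s) / (\sum_s w s).
Definition Ekw (F : {ffun 'I_k -> config n} -> R) :=
  (\sum_S F S * \prod_(a < k) w (S a)) / (\sum_s w s) ^+ k.

Lemma Zpos : 0 < \sum_s w s.
Proof.
have s0 : config n := [ffun=> true].
rewrite (bigD1 s0) //=; apply: ltr_pwDl; first exact: wpos.
by apply: sumr_ge0 => s _; apply: ltW.
Qed.

Lemma Ek_prod (phi : config n -> R) :
  Ekw (fun S => \prod_(a < k) phi (S a)) = Ew phi ^+ k.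
Proof.
rewrite /Ekw /Ew expr_div_n; congr (_ / _).
rewrite -[in RHS](card_ord k) -prodr_const bigA_distr_bigA.
by apply: eq_bigr => S _; rewrite big_split.
Qed.

Lemma EkD F G : Ekw (fun S => F S + G S) = Ekw F + Ekw G.
Proof. by rewrite /Ekw -mulrDl -big_split; congr (_ / _); apply: eq_bigr => S _; rewrite mulrDl. Qed.

Lemma EkZ c F : Ekw (fun S => c * F S) = c * Ekw F.
Proof. by rewrite /Ekw mulrA mulr_sumr; congr (_ / _); apply: eq_bigr => S _; rewrite mulrA. Qed.

Lemma Ek_cst c : Ekw (fun _ => c) = c.
Proof.
have E1 : Ekw (fun _ => 1) = 1.
  have := Ek_prod (fun _ => 1).
  rewrite (_ : (fun S : {ffun 'I_k -> config n} => \prod_(a < k) 1) = fun _ => 1); last first.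
    by apply/funext => S; rewrite big1_eq.
  move=> ->; rewrite /Ew.
  under eq_bigr do rewrite mul1r.
  by rewrite divff ?expr1n // gt_eqF // Zpos.
rewrite -[RHS]mulr1 -E1 -EkZ; congr Ekw; apply/funext => S; by rewrite mulr1.
Qed.

Lemma Ek_sum m (F : 'I_m -> _ -> R) : Ekw (fun S => \sum_(i < m) F i S) = \sum_(i < m) Ekw (F i).
Proof.
rewrite /Ekw -mulr_suml; congr (_ / _); rewrite exchange_big /=.
by apply: eq_bigr => S _; rewrite mulr_suml.
Qed.

Lemma Ew_sum m (F : 'I_m -> _ -> R) : Ew (fun s => \sum_(i < m) F i s) = \sum_(i < m) Ew (F i).
Proof.
rewrite /Ew -mulr_suml; congr (_ / _); rewrite exchange_big /=.
by apply: eq_bigr => S _; rewrite mulr_suml.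
Qed.

Lemma EwZ c f : Ew (fun s => c * f s) = c * Ew f.
Proof. by rewrite /Ew mulrA mulr_sumr; congr (_ / _); apply: eq_bigr => S _; rewrite mulrA. Qed.

Lemma Ew_bound f : (forall s, `|f s| <= 1) -> `|Ew f| <= 1.
Proof.
move=> fb; have Z0 := Zpos.
rewrite /Ew normrM normfV (gtr0_norm Z0) ler_pdivrMr // mul1r.
apply: le_trans (ler_norm_sum _ _ _) _; apply: ler_sum => s _.
by rewrite normrM (gtr0_norm (wpos s)) ler_piMl // ltW.
Qed.

Lemma Ek_ge0 F : (forall S, 0 <= F S) -> 0 <= Ekw F.
Proof.
move=> F0; rewrite /Ekw; apply: divr_ge0; last by rewrite exprn_ge0 // ltW // Zpos.
apply: sumr_ge0 => S _; apply: mulr_ge0 => //; apply: prodr_ge0 => a _; exact: ltW.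
Qed.

Definition gi (i : 'I_n) := Ew (fun s => spin R (s i)).
Definition gij (i j : 'I_n) := Ew (fun s => spin R (s i) * spin R (s j)).

Lemma Ek_overlap : Ekw (@overlap R n k) = n%:R^-1 * \sum_i gi i ^+ k.
Proof.
rewrite /overlap EkZ Ek_sum; congr (_ * _); apply: eq_bigr => i _.
by rewrite (Ek_prod (fun s => spin R (s i))).
Qed.

Lemma overlap_sq S : @overlap R n k S ^+ 2 =
  n%:R^-1 ^+ 2 * \sum_i \sum_j \prod_(a < k) (spin R (S a i) * spin R (S a j)).
Proof.
rewrite /overlap exprMn; congr (_ * _); rewrite expr2 mulr_suml; apply: eq_bigr => i _.
by rewrite mulr_sumr; apply: eq_bigr => j _; rewrite big_split.
Qed.

Lemma var_formula :
  Ekw (fun S => (@overlap R n k S - Ekw (@overlap R n k)) ^+ 2) =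
  n%:R^-1 ^+ 2 * \sum_i \sum_j (gij i j ^+ k - (gi i * gi j) ^+ k).
Proof.
set c := Ekw (@overlap R n k).
have -> : (fun S => (@overlap R n k S - c) ^+ 2) =
   (fun S => (n%:R^-1 ^+ 2 * \sum_i \sum_j \prod_(a < k) (spin R (S a i) * spin R (S a j)))
      + ((- (2 * c)) * @overlap R n k S + c ^+ 2)).
  by apply/funext => S; rewrite -overlap_sq; ring.
rewrite EkD EkD EkZ EkZ Ek_cst Ek_sum.
under eq_bigr do rewrite Ek_sum.
under eq_bigr do under eq_bigr do rewrite (Ek_prod (fun s => spin R (s _) * spin R (s _))).
have Hc : c ^+ 2 = n%:R^-1 ^+ 2 * \sum_i \sum_j (gi i * gi j) ^+ k.
  rewrite /c Ek_overlap exprMn; congr (_ * _); rewrite expr2 mulr_suml; apply: eq_bigr => i _.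
  rewrite mulr_sumr. apply: eq_bigr => j _. exact/esym/exprMn.
have -> : - (2 * c) * c + c ^+ 2 = - c ^+ 2 by ring.
rewrite Hc -mulrN -mulrDr -sumrN -big_split /=; congr (_ * _).
by apply: eq_bigr => i _; rewrite -sumrN -big_split.
Qed.

End Alg.

Lemma powdiff_le (R : realType) (k : nat) (a b : R) :
  `|a| <= 1 -> `|b| <= 1 -> b <= a -> a ^+ k - b ^+ k <= k%:R * (a - b).
Proof.
move=> ha hb ba; rewrite subrXX mulrC; apply: ler_wpM2r; first by rewrite subr_ge0.
apply: le_trans (ler_norm _) _; apply: le_trans (ler_norm_sum _ _ _) _.
have -> : (k%:R : R) = \sum_(i < k) (1 : R) by rewrite sumr_const card_ord.
apply: ler_sum => i _; rewrite normrM !normrX.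
by rewrite mulr_ile1 ?exprn_ge0 ?exprn_ile1.
Qed.



Lemma term_der (R : realType) (c a m x : R) :
  is_derive x 1 (fun h : R => c * expR (a + h * m)) (c * m * expR (a + x * m)).
Proof.
have hg : is_derive x 1 (fun h : R => a + h * m) m.
  have -> : (fun h : R => a + h * m) = cst a + (id * cst m) by apply/funext.
  by apply: is_derive_eq; rewrite /GRing.scale /= mulr0 mulr1 !add0r.
have H := @is_derive1_comp R expR (fun h => a + h * m) x _ _ (is_derive_expR _) hg.
have := is_deriveZ c H.
have -> : c \*: (expR \o (fun h : R => a + h * m)) = (fun h : R => c * expR (a + h * m)) by apply/funext.
move=> H2; apply: is_derive_eq; rewrite /GRing.scale /=; ring.
Qed.

Lemma is_derive_bigsum (R : realType) (I : finType) (h : I -> R -> R) (dh : I -> R) (x : R) :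
  (forall i, is_derive x 1 (h i) (dh i)) ->
  is_derive x 1 (fun y => \sum_i h i y) (\sum_i dh i).
Proof.
move=> H; have -> : (fun y => \sum_i h i y) = \sum_i h i by rewrite fct_sumE.
elim/big_ind2 : _ => //; first exact: is_derive_cst.
by move=> *; exact: is_deriveD.
Qed.

Lemma derivable_bigsum (R : realType) (I : finType) (h : I -> R -> R) (x : R) :
  (forall i, derivable (h i) x 1) -> derivable (fun y => \sum_i h i y) x 1.
Proof.
move=> H; have H' : forall i, is_derive x 1 (h i) ('D_1 (h i) x) by move=> i; apply: derivableP.
by have [] := @is_derive_bigsum R I h _ x H'.
Qed.

Section Deriv.
Variables (R : realType) (n : nat) (J : {set 'I_n} -> R) (tau : 'I_n -> nat) (h1 : R).

Definition Aof (s : config n) := \sum_X J X * sigmaX R X s + h1 * \sum_i (tau i)%:R * spin R (s i).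
Definition Mof (s : config n) := \sum_i spin R (s i).

Lemma boltzE h s : boltz J tau h h1 s = expR (Aof s + h * Mof s).
Proof. by rewrite /boltz /hamiltonian /Aof /Mof; congr expR; ring. Qed.

Definition N (f : config n -> R) h := \sum_s f s * expR (Aof s + h * Mof s).

Lemma N_der f (x : R) : is_derive x 1 (N f) (N (fun s => f s * Mof s) x).
Proof.
rewrite /N; apply: (@is_derive_bigsum R (config n)) => s; exact: term_der.
Qed.

Lemma N1_pos h : 0 < N (fun _ => 1) h.
Proof.
have s0 : config n := [ffun=> true].
rewrite /N (bigD1 s0) //= mul1r; apply: ltr_pwDl; first exact: expR_gt0.
by apply: sumr_ge0 => s _; rewrite mul1r expR_ge0.
Qed.

Lemma gibbsE f h : gibbs J tau h h1 f = N f h / N (fun _ => 1) h.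
Proof.
rewrite /gibbs /partition /N; congr (_ / _).
  by apply: eq_bigr => s _; rewrite boltzE.
by apply: eq_bigr => s _; rewrite boltzE mul1r.
Qed.

Lemma ratio_der f (x : R) : is_derive x 1 (fun h => gibbs J tau h h1 f)
  (gibbs J tau x h1 (fun s => f s * Mof s) - gibbs J tau x h1 f * gibbs J tau x h1 Mof).
Proof.
have -> : (fun h => gibbs J tau h h1 f) = N f * (fun h => (N (fun _ => 1) h)^-1).
  by apply/funext => h; rewrite gibbsE.
have H1 := N_der (fun _ => 1) x.
have HV := is_deriveV (lt0r_neq0 (N1_pos x)) H1.
have HM := is_deriveM (N_der f x) HV.
have E : N (fun s => 1 * Mof s) x = N Mof x.
  by rewrite /N; apply: eq_bigr => s _; rewrite mul1r.
rewrite E in HM.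
apply: is_derive_eq; rewrite !gibbsE /GRing.scale /=.
have := N1_pos x; set z := N (fun _ => 1) x => z0.
field; exact: lt0r_neq0.
Qed.

Lemma gibbs_derivable f (x : R) : derivable (fun h => gibbs J tau h h1 f) x 1.
Proof. by have [] := ratio_der f x. Qed.

End Deriv.

Import numFieldNormedType.Exports.


Lemma derivable_cont (R : realType) (f : R -> R) (x : R) :
  derivable f x 1 -> {for x, continuous f}.
Proof. by move=> H; apply/differentiable_continuous/derivable1_diffP. Qed.

Lemma derivable_pow (R : realType) (f : R -> R) (x : R) m :
  derivable f x 1 -> derivable (fun h => f h ^+ m) x 1.
Proof.
move=> df; elim: m => [|m IH].
  have -> : (fun h => f h ^+ 0) = cst 1 by apply/funext.
  exact: derivable_cst.
have -> : (fun h => f h ^+ m.+1) = f * (fun h => f h ^+ m) by apply/funext => h; rewrite /= exprS.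
exact: derivableM.
Qed.

Theorem theorem2p1 (R : realType) (n : nat) (theta : R) (k : nat)
  (hlo hhi h1 alpha : R)
  (J : {set 'I_n} -> R) (tau : 'I_n -> nat) :
  (1 <= n)%N ->
  2^-1 < theta -> theta <= 7 / 8 ->
  (1 <= k)%N ->
  0 < hlo -> hlo <= hhi -> hhi < 1 ->
  0 <= h1 -> h1 <= 1 ->
  0 <= alpha -> alpha <= 1 ->
  (forall X, 0 <= J X) ->
  (forall h0 : R, hlo <= h0 <= hhi -> forall i j : 'I_n,
     gibbs J tau h0 h1 (fun s => spin R (s i) * spin R (s j))
     - gibbs J tau h0 h1 (fun s => spin R (s i))
       * gibbs J tau h0 h1 (fun s => spin R (s j)) >= 0) ->
  (\int[lebesgue_measure]_(h0 in `[hlo, hhi]%classic)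
     (@gibbsk R n k J tau h0 h1
        (fun S => (@overlap R n k S - @gibbsk R n k J tau h0 h1 (@overlap R n k)) ^+ 2))%:E
   <= ((2 * k%:R) / n%:R)%:E)%E.
Proof.
move=> n1 _ _ k1 a0 ab b1 _ _ _ _ J0 Hcov.
have n0 : (0 : R) < n%:R by rewrite ltr0n.
have wpos h : forall s, 0 < boltz J tau h h1 s by move=> s; exact: expR_gt0.
pose gI h (i : 'I_n) := gibbs J tau h h1 (fun s => spin R (s i)).
pose gIJ h (i j : 'I_n) := gibbs J tau h h1 (fun s => spin R (s i) * spin R (s j)).
pose V h := n%:R^-1 ^+ 2 * \sum_i \sum_j (gIJ h i j ^+ k - (gI h i * gI h j) ^+ k).
have HV (h : R) : @gibbsk R n k J tau h h1
        (fun S => (@overlap R n k S - @gibbsk R n k J tau h h1 (@overlap R n k)) ^+ 2) = V h.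
  exact: (@var_formula R n k (boltz J tau h h1) (wpos h)).
have -> : (fun h => (@gibbsk R n k J tau h h1
        (fun S => (@overlap R n k S - @gibbsk R n k J tau h h1 (@overlap R n k)) ^+ 2))%:E)
   = (fun h => (V h)%:E).
  by apply/funext => h; rewrite HV.
pose c : R := k%:R * n%:R^-1 ^+ 2.
pose M := @Mof R n.
pose F h := gibbs J tau h h1 M.
pose G := c \*: F.
pose g h := c * (gibbs J tau h h1 (fun s => M s * M s) - F h * F h).
have Gder (x : R) : is_derive x 1 G (g x).
  exact: (is_deriveZ c (@ratio_der R n J tau h1 M x)).
have V0 (h : R) : 0 <= V h.
  rewrite -HV; apply: (@Ek_ge0 R n k _ (wpos h)).
  by move=> S; exact: sqr_ge0.
have spin1 (b : bool) : `|spin R b| <= 1.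
  by case: b; rewrite /spin ?normrN normr1.
have FE (h : R) : F h = \sum_i gI h i.
  exact: (@Ew_sum R n (boltz J tau h h1) n (fun i s => spin R (s i))).
have gIb (h : R) i : `|gI h i| <= 1.
  by apply: (@Ew_bound R n (boltz J tau h h1) (wpos h)) => s.
have gIJb (h : R) i j : `|gIJ h i j| <= 1.
  apply: (@Ew_bound R n (boltz J tau h h1) (wpos h)) => s.
  by rewrite normrM mulr_ile1.
have Vg (h : R) : hlo <= h <= hhi -> V h <= g h.
  move=> Hh.
  have E1 : gibbs J tau h h1 (fun s => M s * M s) = \sum_i \sum_j gIJ h i j.
    have -> : (fun s => M s * M s) = (fun s => \sum_i \sum_j spin R (s i) * spin R (s j)).
      by apply/funext => s; rewrite /M /Mof mulr_suml; apply: eq_bigr => i _; rewrite mulr_sumr.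
    change (@Ew R n (boltz J tau h h1) (fun s => \sum_i \sum_j spin R (s i) * spin R (s j)) = \sum_i \sum_j gIJ h i j).
    rewrite (@Ew_sum R n (boltz J tau h h1) n).
    apply: eq_bigr => i _; exact: (@Ew_sum R n (boltz J tau h h1) n).
  have E2 : F h * F h = \sum_i \sum_j gI h i * gI h j.
    rewrite FE mulr_suml; apply: eq_bigr => i _; by rewrite mulr_sumr.
  have Vg' : V h <= n%:R^-1 ^+ 2 * \sum_i \sum_j (k%:R * (gIJ h i j - gI h i * gI h j)).
    rewrite /V; apply: ler_wpM2l; first by rewrite exprn_ge0 // invr_ge0 ltW.
    apply: ler_sum => i _; apply: ler_sum => j _; apply: powdiff_le => //.
    - by rewrite normrM mulr_ile1.
    - by rewrite -subr_ge0; exact: Hcov.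
  apply: le_trans Vg' _; rewrite le_eqVlt; apply/orP; left; apply/eqP.
  rewrite /g E1 E2 -sumrB /c.
  rewrite mulr_sumr [RHS]mulr_sumr; apply: eq_bigr => i _.
  rewrite -sumrB.
  rewrite mulr_sumr [RHS]mulr_sumr; apply: eq_bigr => j _.
  by rewrite mulrA (mulrC (n%:R^-1 ^+ 2)).
have Vcont : continuous V.
  move=> x; apply: derivable_cont.
  have -> : V = (fun _ => n%:R^-1 ^+ 2) * (fun h => \sum_i \sum_j (gIJ h i j ^+ k - (gI h i * gI h j) ^+ k)).
    by apply/funext.
  apply: derivableM; first exact: derivable_cst.
  apply: derivable_bigsum => i.
  apply: derivable_bigsum => j.
  apply: derivableB.
  apply: (@derivable_pow R (fun h => gIJ h i j)); first exact: gibbs_derivable.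
  apply: (@derivable_pow R (fun h => gI h i * gI h j)).
  by apply: derivableM; exact: gibbs_derivable.
have gcont : continuous g.
  move=> x; apply: derivable_cont.
  have -> : g = (fun _ => c) * (fun h => gibbs J tau h h1 (fun s => M s * M s) - F h * F h).
    by apply/funext.
  apply: derivableM; first exact: derivable_cst.
  by apply: derivableB; [exact: gibbs_derivable | apply: derivableM; exact: gibbs_derivable].
have Fbound (h : R) : `|F h| <= n%:R.
  rewrite FE; apply: le_trans (ler_norm_sum _ _ _) _.
  have -> : (n%:R : R) = \sum_(i < n) (1 : R) by rewrite sumr_const card_ord.
  by apply: ler_sum => i _; exact: gIb.
have [eab|ltab] : hlo = hhi \/ hlo < hhi.
  by move: ab; rewrite le_eqVlt => /orP[/eqP->|->]; [left|right].
  rewrite eab (@integral_Sset1 R _ _ hhi) ?lee_fin; last by rewrite set_itvE.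
  by rewrite divr_ge0 // mulr_ge0.
have mI : measurable (`[hlo, hhi]%classic : set R) by exact: measurable_itv.
have mV : measurable_fun `[hlo, hhi] V.
  by apply: measurable_funS (measurable_realfun.continuous_measurable_fun Vcont) => //.
have mg : measurable_fun `[hlo, hhi] g.
  by apply: measurable_funS (measurable_realfun.continuous_measurable_fun gcont) => //.
apply: (@le_trans _ _ (\int[lebesgue_measure]_(h0 in `[hlo, hhi]) (g h0)%:E)%E).
  apply: ge0_le_integral. all: try done. all: try (by move=> x _; rewrite lee_fin).
  all: try (exact/measurable_realfun.measurable_EFinP).
  all: try (by move=> x; rewrite /= in_itv /= => /Vg; rewrite lee_fin).
have Gcont x : {for x, continuous G}.
  by apply: derivable_cont; have [] := Gder x.
rewrite (@continuous_FTC2 R g G hlo hhi ltab).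
- rewrite -EFinB lee_fin /G /= /GRing.scale /= -mulrBr.
  have h2 : F hhi - F hlo <= 2 * n%:R.
    have := Fbound hhi; have := Fbound hlo.
    rewrite !ler_norml => /andP[? ?] /andP[? ?]; lra.
  have c0 : 0 <= c by rewrite /c mulr_ge0 // exprn_ge0 // invr_ge0 ltW.
  apply: le_trans (ler_wpM2l c0 h2) _; rewrite le_eqVlt; apply/orP; left; apply/eqP.
  rewrite /c; field; exact: lt0r_neq0.
- exact: continuous_subspaceT.
- split.
  + by move=> x _; have [] := Gder x.
  + exact: cvg_at_right_filter (Gcont hlo).
  + exact: cvg_at_left_filter (Gcont hhi).
- by move=> x _; rewrite derive1E; have [_ ->] := Gder x.
Qed.
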